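(* Let $n\ge1$, equip $\{0,1\}^n$ with the uniform probability measure, and for $k=0,\dots,n$ let $\mathcal{F}^*_k$ be the product of the trivial $\sigma$-algebra on $\{0,1\}^k$ (first $k$ coordinates) and the full $\sigma$-algebra on $\{0,1\}^{n-k}$ (last $n-k$ coordinates); put $\mathcal{F}^*_{n+1}=\mathcal{F}^*_n$, and write $\mathbb{E}^*_k=\mathbb{E}(\cdot\mid\mathcal{F}^*_k)$. Then there is no constant $C$ (independent of $n$) such that for all $n$ and all $f_0,\dots,f_n\in L^1(\{0,1\}^n)$ satisfying $\mathbb{E}^*_{k+1}f_k=0$ for $k=0,\dots,n$, one has \[C\,\mathbb{E}\Big(\sum_{k=0}^n|f_k|^2\Big)^{1/2}\ge\mathbb{E}\Big(\sum_{k=0}^n|\mathbb{E}^*_kf_k|^2\Big)^{1/2}.\] *)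

(* Defs.v *)
From mathcomp Require Import all_boot all_order all_algebra.
From mathcomp Require Import reals.
Set Implicit Arguments. Unset Strict Implicit. Unset Printing Implicit Defensive.
Import Order.TTheory GRing.Theory Num.Theory.
Local Open Scope ring_scope.

Definition cube (n : nat) := {ffun 'I_n -> bool}.

(* y lies in the same atom of F*_k as x : y agrees with x on the last n-k
   coordinates (indices i >= k).  For k >= n every y agrees, so F*_k is
   trivial for k >= n; in particular F*_{n+1} = F*_n. *)
Definition agree (n k : nat) (x y : cube n) : bool :=
  [forall i : 'I_n, (k <= i)%N ==> (y i == x i)].

Definition condE (R : realType) (n k : nat) (f : cube n -> R) (x : cube n) : R :=
  (#|[pred y | agree k x y]|%:R)^-1 * \sum_(y : cube n | agree k x y) f y.

Definition expect (R : realType) (n : nat) (g : cube n -> R) : R :=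
  (#|{: cube n}|%:R)^-1 * \sum_(x : cube n) g x.

(* Main.v *)
Require Import Defs.
From mathcomp Require Import all_boot all_order all_algebra.
From mathcomp Require Import reals.
From mathcomp Require Import lra zify ring.
Import Order.TTheory GRing.Theory Num.Theory.
Local Open Scope ring_scope.

(* Counterexample: n = 2N, f_k = (sign of odd coordinate k) * 1_A, where
   A = {all even coordinates false}.  E* of the square function of E*_k f_k
   grows like N |A|, while that of f grows like sqrt N |A|. *)
Set Implicit Arguments. Unset Strict Implicit.
Definition flip (n : nat) (t : 'I_n) (x : cube n) : cube n :=
  [ffun i => if i == t then ~~ x i else x i].

Lemma flipK (n : nat) (t : 'I_n) : involutive (flip t).
Proof. by move=> x; apply/ffunP=> i; rewrite !ffunE; case: eqP => // _; rewrite negbK. Qed.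

Lemma agree_refl (n k : nat) (x : cube n) : agree k x x.
Proof. by apply/forallP=> i; apply/implyP. Qed.

Lemma agree_sym (n k : nat) (x y : cube n) : agree k x y = agree k y x.
Proof.
by apply/forallP/forallP=> H i; apply/implyP=> Hi; move/implyP: (H i) => /(_ Hi) /eqP ->.
Qed.

Lemma agree_trans (n k : nat) (x y z : cube n) : agree k x y -> agree k y z -> agree k x z.
Proof.
move=> /forallP H1 /forallP H2; apply/forallP=> i; apply/implyP=> Hi.
by move/implyP: (H1 i) => /(_ Hi) /eqP <-; move/implyP: (H2 i) => /(_ Hi).
Qed.

Lemma agree_flip (n k : nat) (t : 'I_n) (x y : cube n) : (t < k)%N ->
  agree k x (flip t y) = agree k x y.
Proof.
move=> tk; have E (i : 'I_n) : (k <= i)%N -> flip t y i = y i.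
  by move=> Hi; rewrite ffunE; case: eqP => // ei; move: Hi; rewrite ei leqNgt tk.
by apply/forallP/forallP=> H i; apply/implyP=> Hi; move/implyP: (H i) => /(_ Hi); rewrite E.
Qed.

Lemma card_cl (n k : nat) (x y : cube n) : agree k x y ->
  #|[pred z | agree k x z]| = #|[pred z | agree k y z]|.
Proof.
move=> axy; apply: eq_card=> z /=; apply/idP/idP=> H.
  by apply: agree_trans H; rewrite agree_sym.
by apply: agree_trans H.
Qed.

Lemma condE_anti (R : realType) (n k : nat) (t : 'I_n) (f : cube n -> R) (x : cube n) :
  (t < k)%N -> (forall y, f (flip t y) = - f y) -> condE k f x = 0.
Proof.
move=> tk Hf; rewrite /condE.
set S := \sum_(y | agree k x y) f y.
have : S = - S.
  rewrite {1}/S (reindex_inj (inv_inj (@flipK n t))) /=.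
  rewrite /S -sumrN; apply: eq_big => y; first by rewrite agree_flip.
  by move=> _; rewrite Hf.
move=> HS; have -> : S = 0.
  by lra.
by rewrite mulr0.
Qed.

Unset Implicit Arguments. Set Strict Implicit.



Definition Aset (n : nat) (x : cube n) : bool := [forall i : 'I_n, odd i || ~~ x i].
Definition sg (R : realType) (b : bool) : R := if b then -1 else 1.
Definition gk (R : realType) (n k : nat) (x : cube n) : R :=
  \sum_(i : 'I_n | (val i == k) && odd i) sg R (x i).
Definition fex (R : realType) (n k : nat) (x : cube n) : R := (Aset n x)%:R * gk R n k x.

Lemma gk_single (R : realType) (n k : nat) (j : 'I_n) (x : cube n) :
  val j = k -> odd j -> gk R n k x = sg R (x j).
Proof.
move=> vj oj; rewrite /gk (big_pred1 j) // => i /=.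
apply/idP/eqP => [/andP[/eqP vi _]|->]; first by apply: val_inj => /=; rewrite vi vj.
by rewrite oj vj eqxx.
Qed.

Lemma gk_none (R : realType) (n k : nat) (x : cube n) :
  ~~ [exists i : 'I_n, (val i == k) && odd i] -> gk R n k x = 0.
Proof.
move/existsPn=> H; rewrite /gk big_pred0 // => i; exact/negbTE.
Qed.

Lemma sg_norm (R : realType) b : `|sg R b| = 1.
Proof. by case: b; rewrite /sg ?normrN normr1. Qed.

Lemma fex_cond (R : realType) (n k : nat) (x : cube n) : condE k.+1 (fex R n k) x = 0.
Proof.
case: (boolP [exists i : 'I_n, (val i == k) && odd i]) => [/existsP[j /andP[/eqP vj oj]]|Hn].
  apply: (@condE_anti R n k.+1 j); first by rewrite vj.
  move=> y; rewrite /fex !(gk_single R n k j _ vj oj).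
  have -> : Aset n (flip j y) = Aset n y.
    apply: eq_forallb => i; rewrite ffunE; case: eqP => // ->; by rewrite oj.
  by rewrite ffunE eqxx /sg; case: (y j) => /=; rewrite ?mulrN ?mulr1 ?opprK.
rewrite /condE big1 ?mulr0 // => y _; by rewrite /fex gk_none // mulr0.
Qed.

Lemma fex_bound (R : realType) (n k : nat) (x : cube n) :
  `|fex R n k x| ^+ 2 <= (Aset n x)%:R.
Proof.
rewrite /fex normrM.
case: (boolP [exists i : 'I_n, (val i == k) && odd i]) => [/existsP[j /andP[/eqP vj oj]]|Hn].
  by rewrite (gk_single R n k j _ vj oj) sg_norm mulr1; case: (Aset n x); rewrite ?normr1 ?normr0 ?expr1n ?expr0n.
by rewrite gk_none // normr0 mulr0 expr0n /=; case: (Aset n x).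
Qed.

Lemma rhs_bound (R : realType) (n : nat) (x : cube n) :
  Num.sqrt (\sum_(k < n.+1) `|fex R n k x| ^+ 2) <= Num.sqrt (n.+1)%:R * (Aset n x)%:R.
Proof.
have H : \sum_(k < n.+1) `|fex R n k x| ^+ 2 <= \sum_(k < n.+1) (Aset n x)%:R :> R.
  by apply: ler_sum => k _; exact: fex_bound.
rewrite sumr_const card_ord in H.
case: (Aset n x) H => /= H.
  by rewrite mulr1 ler_sqrt // -mulr_natr mul1r in H *.
rewrite mulr0; rewrite mul0rn in H.
have -> : \sum_(k < n.+1) `|fex R n k x| ^+ 2 = 0.
  by apply/eqP; rewrite eq_le H sumr_ge0 // => k _; rewrite sqr_ge0.
by rewrite sqrtr0.
Qed.

Definition Ek (n k : nat) (x : cube n) : bool :=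
  [&& odd k, (k < n)%N, [exists j : 'I_n, (val j == k.-1) && x j] &
     [forall i : 'I_n, (k < i)%N ==> odd i || ~~ x i]].

Lemma odd_split (k : nat) : odd k -> k = (k./2 * 2).+1 /\ k.-1 = (k./2 * 2)%N.
Proof. by move=> ok; rewrite muln2 (odd_halfK ok); split => //; case: k ok. Qed.

Lemma Ek_lt (n k k' : nat) (x : cube n) : (k < k')%N -> Ek n k x -> Ek n k' x -> False.
Proof.
move=> kk /and4P[ok _ _ /forallP Hf] /and4P[ok' _ /existsP[j /andP[/eqP vj xj]] _].
move: (Hf j) => /implyP.
have [e1 _] := odd_split _ ok; have [e2 e3] := odd_split _ ok'.
have oj : odd j = false by rewrite vj e3 oddM andbF.
rewrite oj xj /=; move=> H; have : (k < j)%N by rewrite vj; lia.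
by move=> /H.
Qed.

Lemma Ek_disj (n k k' : nat) (x : cube n) : Ek n k x -> Ek n k' x -> k = k'.
Proof.
move=> H1 H2; case: (ltngtP k k') => // kk; [exfalso; exact: (Ek_lt n k k' x kk H1 H2)|].
exfalso; exact: (Ek_lt n k' k x kk H2 H1).
Qed.

Lemma sqrt_sel (R : realType) (m : nat) (a : 'I_m -> R) (E : 'I_m -> bool) :
  (forall k k', E k -> E k' -> k = k') ->
  \sum_(k < m) `|a k| * (E k)%:R <= Num.sqrt (\sum_(k < m) `|a k| ^+ 2).
Proof.
move=> Hd; case: (boolP [exists k, E k]) => [/existsP[k0 Ek0]|Hn].
  rewrite (bigD1 k0) //= big1; last first.
    move=> k nk; case: (boolP (E k)) => Ek; last by rewrite mulr0.
    by move: nk; rewrite (Hd _ _ Ek Ek0) eqxx.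
  rewrite Ek0 mulr1 addr0 -{1}normr_id -{1}(sqrtr_sqr `|a k0|) ler_sqrt; last first.
    by apply: sumr_ge0 => k _; rewrite sqr_ge0.
  rewrite (bigD1 k0) //= lerDl; apply: sumr_ge0 => k _; exact: sqr_ge0.
rewrite big1 ?sqrtr_ge0 // => k _; move/existsPn: Hn => /(_ k) /negbTE ->; by rewrite mulr0.
Qed.

Lemma sum_ind (R : numDomainType) (T : finType) (P : pred T) :
  \sum_(x : T) ((P x)%:R : R) = (#|P|)%:R.
Proof.
rewrite (bigID P) /= [X in _ + X]big1 ?addr0 => [|x /negbTE -> //].
rewrite (eq_bigr (fun _ => 1)) => [|x ->//]. by rewrite sumr_const.
Qed.

Lemma half_card (n k : nat) (t : 'I_n) (y : cube n) : (t < k)%N ->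
  #|[pred z | agree k y z]| = (#|[pred z | agree k y z && z t]|).*2.
Proof.
move=> tk; rewrite -(cardID [pred z : cube n | z t] [pred z : cube n | agree k y z]) -addnn; congr (_ + _).
rewrite -!sum1_card (reindex_inj (inv_inj (flipK t))) /=.
apply: eq_bigl => z; rewrite !inE agree_flip // ffunE eqxx negbK andbC.
done.
Qed.

Lemma condE_abs (R : realType) (n k : nat) (ok : odd k) (kn : (k < n)%N) (x : cube n) :
  `|condE k (fex R n k) x| =
  (#|[pred y | agree k x y]|%:R)^-1 * \sum_(y | agree k x y) ((Aset n y)%:R : R).
Proof.
pose j0 : 'I_n := Ordinal kn.
rewrite /condE.
have -> : \sum_(y | agree k x y) fex R n k y =
          sg R (x j0) * \sum_(y | agree k x y) (Aset n y)%:R.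
  rewrite mulr_sumr; apply: eq_bigr => y ag.
  rewrite /fex (gk_single R n k j0 y erefl ok) mulrC.
  by move/forallP: ag => /(_ j0) /implyP /(_ (leqnn k)) /eqP ->.
rewrite normrM normrM sg_norm mul1r.
rewrite ger0_norm ?invr_ge0 ?ler0n // ger0_norm //.
by apply: sumr_ge0 => y _; rewrite ler0n.
Qed.

Lemma perk (R : realType) (n k : nat) (ok : odd k) (kn : (k < n)%N) :
  \sum_(x : cube n) `|condE k (fex R n k) x| * (Ek n k x)%:R =
  (\sum_(x : cube n) (Aset n x)%:R) / 2.
Proof.
have tn : (k.-1 < n)%N by apply: leq_ltn_trans (leq_pred k) kn.
pose t : 'I_n := Ordinal tn.
have tk : (t < k)%N by rewrite /= prednK // lt0n; case: k ok {kn tn t}.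
pose cl (y : cube n) : R := (#|[pred z | agree k y z]|%:R).
have clE x y : agree k x y -> cl x = cl y by move=> a; rewrite /cl (card_cl a).
under eq_bigr do rewrite condE_abs //.
transitivity (\sum_(y : cube n) (Aset n y)%:R * (cl y)^-1 *
                 \sum_(x : cube n) ((agree k x y && Ek n k x)%:R : R)).
  rewrite (eq_bigr (fun x => \sum_(y : cube n)
                ((agree k x y && Ek n k x)%:R * (Aset n y)%:R * (cl y)^-1))); last first.
    move=> x _; rewrite -/(cl x) mulrAC mulr_sumr big_mkcond /=; apply: eq_bigr => y _.
    case: (boolP (agree k x y)) => a /=; last by rewrite !mul0r.
    rewrite (clE x y a); case: (Ek n k x); rewrite /= ?mulr1 ?mulr0 ?mul1r ?mul0r //.
    by rewrite mulrC.
  rewrite exchange_big /=; apply: eq_bigr => y _; rewrite mulr_sumr.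
  by apply: eq_bigr => x _; rewrite [RHS]mulrC mulrA.
rewrite mulr_suml; apply: eq_bigr => y _.
case: (boolP (Aset n y)) => Ay /=; last by rewrite !mul0r.
rewrite mul1r.
have -> : \sum_(x : cube n) ((agree k x y && Ek n k x)%:R : R) =
          (#|[pred z | agree k y z && z t]|)%:R.
  rewrite -sum_ind; apply: eq_bigr => x _; congr (_%:R).
  rewrite agree_sym; case: (boolP (agree k y x)) => a /=; last by rewrite (negbTE a).
  rewrite /Ek ok kn /=.
  have -> : [exists j : 'I_n, (val j == k.-1) && x j] = x t.
    apply/existsP/idP => [[j /andP[/eqP vj xj]]|xt]; last by exists t; rewrite eqxx xt.
    by have -> : t = j by apply: val_inj.
  have -> : [forall i : 'I_n, (k < i)%N ==> odd i || ~~ x i] = true.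
    apply/forallP => i; apply/implyP => ki.
    move/forallP: a => /(_ i) /implyP /(_ (ltnW ki)) /eqP ->.
    by move/forallP: Ay => /(_ i).
  by rewrite a andbT.
have hpos : (0 < #|[pred z | agree k y z]|)%N.
  by apply/card_gt0P; exists y; rewrite inE; exact: agree_refl.
rewrite (half_card n k t y tk) double_gt0 in hpos.
rewrite /cl (half_card n k t y tk) -muln2 natrM invfM mulrC mulrA mulfV ?mul1r //.
by rewrite pnatr_eq0 -lt0n.
Qed.

Lemma sum_odd (m : nat) : (\sum_(k < m) odd k)%N = m./2.
Proof.
elim: m => [|m IH]; first by rewrite big_ord0.
by rewrite big_ord_recr /= IH uphalf_half addnC.
Qed.

Lemma count_odd (n : nat) : (\sum_(k < n.+1) (odd k && (k < n)%N))%N = n./2.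
Proof.
rewrite big_ord_recr /= ltnn andbF addn0 -sum_odd.
by apply: eq_bigr => k _; rewrite ltn_ord andbT.
Qed.

Lemma Asum_pos (R : realType) (n : nat) : 0 < \sum_(x : cube n) ((Aset n x)%:R : R).
Proof.
pose x0 : cube n := [ffun _ => false].
have A0 : Aset n x0 by apply/forallP => i; rewrite ffunE orbT.
rewrite (bigD1 x0) //= A0 ltr_pwDl //; apply: sumr_ge0 => x _; exact: ler0n.
Qed.

Lemma lhs_bound (R : realType) (n : nat) :
  (n./2)%:R * ((\sum_(x : cube n) ((Aset n x)%:R : R)) / 2) <=
  \sum_(x : cube n) Num.sqrt (\sum_(k < n.+1) `|condE k (fex R n k) x| ^+ 2).
Proof.
apply: le_trans (_ : \sum_(x : cube n) \sum_(k < n.+1)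
      `|condE k (fex R n k) x| * (Ek n k x)%:R <= _); last first.
  apply: ler_sum => x _; apply: sqrt_sel => k k' E1 E2; apply: val_inj.
  exact: Ek_disj E1 E2.
rewrite exchange_big /=.
rewrite (eq_bigr (fun k : 'I_n.+1 => (odd k && (k < n)%N)%:R *
     ((\sum_(x : cube n) ((Aset n x)%:R : R)) / 2))); last first.
  move=> k _; case: (boolP (odd k && (k < n)%N)) => /= H.
    by case/andP: H => ok kn; rewrite mul1r perk.
  rewrite mul0r big1 // => x _.
  have -> : Ek n k x = false by rewrite /Ek; case/nandP: H => /negbTE ->; rewrite ?andbF.
  by rewrite mulr0.
by rewrite -mulr_suml -[X in X%:R * _ <= _]count_odd natr_sum.
Qed.

Theorem theorem1p4 (R : realType) :
  ~ (exists C : R, forall (n : nat), (1 <= n)%N ->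
      forall f : 'I_n.+1 -> cube n -> R,
        (forall (k : 'I_n.+1) (x : cube n), condE (k.+1) (f k) x = 0) ->
        expect (fun x => Num.sqrt (\sum_(k < n.+1) `|condE k (f k) x| ^+ 2))
        <= C * expect (fun x => Num.sqrt (\sum_(k < n.+1) `|f k x| ^+ 2))).
Proof.
case=> C H.
pose N := (Num.truncn (12 * C ^+ 2)).+1.
have hN : 12 * C ^+ 2 < N%:R by exact: truncnS_gt.
pose n := N.*2.
have n1 : (1 <= n)%N by rewrite /n double_gt0.
have := H n n1 (fun k => fex R n k) (fun k x => fex_cond R n k x).
rewrite /expect.
set P := (#|{: cube n}|%:R : R)^-1.
set A := \sum_(x : cube n) ((Aset n x)%:R : R).
have Ppos : 0 < P by rewrite invr_gt0 ltr0n; apply/card_gt0P; exists [ffun _ => false].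
have Apos : 0 < A := Asum_pos R n.
have L := lhs_bound R n; rewrite -/A /n doubleK -/n in L.
have Rb : \sum_(x : cube n) Num.sqrt (\sum_(k < n.+1) `|fex R n k x| ^+ 2)
          <= Num.sqrt (n.+1)%:R * A.
  rewrite /A mulr_sumr; apply: ler_sum => x _; exact: rhs_bound.
set S := \sum_(x : cube n) Num.sqrt (\sum_(k < n.+1) `|fex R n k x| ^+ 2).
set T := \sum_(x : cube n) Num.sqrt (\sum_(k < n.+1) `|condE k (fex R n k) x| ^+ 2).
move=> Hle.
have S0 : 0 <= S by apply: sumr_ge0 => x _; exact: sqrtr_ge0.
set s := Num.sqrt (n.+1)%:R in Rb.
have s0 : 0 <= s by exact: sqrtr_ge0.
have s2 : s ^+ 2 = (N%:R * 2 + 1) by rewrite sqr_sqrtr ?ler0n // /n -natrM muln2 -addn1 natrD.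
have c0 : 0 <= `|C| by [].
have c2 : `|C| ^+ 2 = C ^+ 2 by rewrite real_normK ?num_real.
have N1 : 1 <= (N%:R : R) by rewrite ler1n.
have key : `|C| * s < N%:R / 2.
  have q : (`|C| * s) ^+ 2 < (N%:R / 2) ^+ 2.
    rewrite exprMn s2 c2; nra.
  have h0 : 0 <= `|C| * s by rewrite mulr_ge0.
  nra.
have h1 : P * T <= `|C| * (P * S).
  apply: (le_trans Hle); apply: ler_wpM2r; [by rewrite mulr_ge0 // ltW | exact: ler_norm].
have h2 : `|C| * (P * S) <= `|C| * (P * (s * A)).
  by apply: ler_wpM2l => //; apply: ler_wpM2l => //; exact: ltW.
have h3 : P * ((N%:R) * (A / 2)) <= P * T by apply: ler_wpM2l => //; exact: ltW.
have Q0 : 0 < P * A by rewrite mulr_gt0.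
have h4 : `|C| * s * (P * A) < N%:R / 2 * (P * A) by rewrite ltr_pM2r.
have e1 : P * ((N%:R) * (A / 2)) = N%:R / 2 * (P * A) by ring.
have e2 : `|C| * (P * (s * A)) = `|C| * s * (P * A) by ring.
lra.
Qed.
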